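(* Let $(X,\mathcal{B})$ be a $t$-$(v,k,\lambda)$ design with $b$ blocks. Then there is a way to write each block $B\in\mathcal{B}$ as an ordered $k$-tuple of its elements such that every point $x\in X$ occurs in each of the $k$ positions in exactly $b/v$ of the ordered blocks if and only if $v$ divides $b$ (equivalently, $k$ divides the number $r=bk/v$ of blocks containing a given point).
   Context: A $t$-$(v,k,\lambda)$ design ($t\ge1$, $t\le k\le v$) is a pair $(X,\mathcal{B})$ where $X$ is a set of $v$ points and $\mathcal{B}$ is a collection of distinct $k$-subsets of $X$ (blocks) such that every $t$-subset of $X$ is contained in exactly $\lambda$ blocks; $b=|\mathcal{B}|$. Every point lies in the same number $r$ of blocks, and $bk=vr$. *)

(* Defs.v *)
From mathcomp Require Import all_boot.
Set Implicit Arguments. Unset Strict Implicit. Unset Printing Implicit Defensive.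

(* A t-(v,k,lambda) design on the point set T (v = #|T|): Bs is a set of
   (hence distinct) k-subsets of T such that every t-subset of T lies in
   exactly lam blocks; 1 <= t <= k <= v. *)
Definition is_design (T : finType) (t k lam : nat) (Bs : {set {set T}}) : Prop :=
  [/\ 1 <= t, t <= k, k <= #|T|,
      (forall B, B \in Bs -> #|B| = k) &
      (forall S : {set T}, #|S| = t -> #|[set B in Bs | S \subset B]| = lam)].

Definition block_ordering (T : finType) (k : nat) (Bs : {set {set T}})
    (f : {set T} -> k.-tuple T) : Prop :=
  forall B, B \in Bs -> uniq (f B) /\ (forall x, (x \in f B) = (x \in B)).

(* Every point occurs in every position in exactly b/v ordered blocks;
   written (count) * v = b to avoid rational division. *)
Definition balanced_ordering (T : finType) (k : nat) (Bs : {set {set T}})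
    (f : {set T} -> k.-tuple T) : Prop :=
  forall (x : T) (i : 'I_k),
    #|[set B in Bs | tnth (f B) i == x]| * #|T| = #|Bs|.

(* Main.v *)
Require Import Defs.
From mathcomp Require Import all_boot zify.
Set Implicit Arguments. Unset Strict Implicit. Unset Printing Implicit Defensive.

Lemma card_sumb (U : finType) (A : {set U}) (Q : pred U) :
  #|[set B in A | Q B]| = \sum_(B in A) Q B.
Proof.
rewrite -sum1_card big_mkcond /= [RHS]big_mkcond /=.
apply: eq_bigr => B _; rewrite inE; by case: (B \in A); case: (Q B).
Qed.

Lemma card_draws_pt (T : finType) (A : {set T}) (x : T) (t : nat) :
  0 < t -> x \in A ->
  #|[set S : {set T} | (x \in S) && (S \subset A) && (#|S| == t)]| = 'C(#|A|.-1, t.-1).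
Proof.
move=> t0 xA.
set D := [set S : {set T} | _].
have -> : 'C(#|A|.-1, t.-1) = #|[set S' : {set T} | S' \subset A :\ x & #|S'| == t.-1]|.
  by rewrite cards_draws (cardsD1 x A) xA.
rewrite -(@card_in_imset _ _ (fun S => S :\ x) D).
  apply: eq_card => S'; rewrite [in RHS]inE; apply/imsetP/idP.
    case=> S; rewrite !inE => /andP[/andP[xS sA] /eqP cS] ->.
    rewrite setSD //= (cardsD1 x S) xS in cS *; apply/eqP; lia.
  move=> /andP[sA /eqP cS]; exists (x |: S').
    rewrite inE setU11 /= subUset sub1set xA (subset_trans sA) ?subsetDl //=.
    have xS : x \notin S' by apply/negP => /(subsetP sA); rewrite !inE eqxx.
    rewrite cardsU1 xS cS; apply/eqP; lia.
  apply/setP => y; rewrite !inE; case: (y =P x) => //= -> .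
  by apply/negP => /(subsetP sA); rewrite !inE eqxx.
move=> S1 S2; rewrite !inE => /andP[/andP[xS1 _] _] /andP[/andP[xS2 _] _] E.
by rewrite -(setD1K xS1) -(setD1K xS2) E.
Qed.

Lemma design_r (T : finType) (t k lam : nat) (Bs : {set {set T}}) (x : T) :
  is_design t k lam Bs ->
  #|[set B in Bs | x \in B]| * 'C(k.-1, t.-1) = lam * 'C(#|T|.-1, t.-1).
Proof.
case=> t1 tk kv Bk Hl.
set D := [set S : {set T} | (x \in S) && (S \subset [set: T]) && (#|S| == t)].
have E : \sum_(S in D) #|[set B in Bs | S \subset B]| = lam * 'C(#|T|.-1, t.-1).
  rewrite -cardsT -(@card_draws_pt _ _ x) ?inE // -/D mulnC -sum_nat_const.
  by apply: eq_bigr => S; rewrite inE => /andP[_ /eqP]; apply: Hl.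
rewrite -E; under eq_bigr do rewrite card_sumb.
rewrite exchange_big /= card_sumb big_distrl /=.
apply: eq_bigr => B BB.
case xB: (x \in B); last first.
  rewrite mul0n; apply/esym/eqP; rewrite sum_nat_eq0; apply/forallP => S.
  apply/implyP; rewrite inE => /andP[/andP[xS _] _].
  by case sB: (S \subset B) => //; move/subsetP: sB => /(_ _ xS); rewrite xB.
rewrite mul1n -(Bk _ BB) -(card_draws_pt t1 xB).
rewrite -card_sumb; apply: eq_card => S; rewrite !inE subsetT andbT /=.
by rewrite -!andbA (andbC (S \subset B)).
Qed.

Lemma design_vr (T : finType) (t k lam : nat) (Bs : {set {set T}}) (x : T) :
  is_design t k lam Bs ->
  #|T| * #|[set B in Bs | x \in B]| = #|Bs| * k.
Proof.
move=> D; have D' := D; case: D' => t1 tk kv Bk Hl.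
have C0 : 0 < 'C(k.-1, t.-1) by rewrite bin_gt0; lia.
have Ry : forall y, #|[set B in Bs | y \in B]| = #|[set B in Bs | x \in B]|.
  move=> y; apply/eqP; rewrite -(eqn_pmul2r C0) !(design_r _ D) //.
rewrite -[LHS]sum_nat_const.
under eq_bigr => y _ do rewrite -(Ry y) card_sumb.
rewrite exchange_big /= -sum_nat_const /= big_mkcond /= [RHS]big_mkcond /=.
apply: eq_bigr => B _; case BB: (B \in Bs) => //=.
rewrite -(Bk _ BB) -sum1_card [RHS]big_mkcond [LHS]big_mkcond /=; apply: eq_bigr => y _; by case: (y \in B).
Qed.

Lemma ltn_sum_pt (I : finType) (P : pred I) (F G : I -> nat) (a : I) :
  P a -> (forall i, P i -> F i <= G i) -> F a < G a ->
  \sum_(i | P i) F i < \sum_(i | P i) G i.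
Proof.
move=> Pa H Ha; rewrite (bigD1 a) //= [X in _ < X](bigD1 a) //=.
rewrite -addSn; apply: leq_add => //; apply: leq_sum => i /andP[Pi _]; exact: H.
Qed.

Lemma sum_eq_in (V : finType) (A : {pred V}) (a : V) :
  \sum_(w in A) (a == w) = (a \in A).
Proof.
case aA: (a \in A).
  rewrite (bigD1 a) //= eqxx big1 // => w /andP[_ /negbTE]; by rewrite eq_sym => ->.
rewrite big1 // => w wA; case: eqP => // E; by rewrite E wA in aA.
Qed.

Lemma sum_split2 k (i j : 'I_k) (h : 'I_k -> nat) : i != j ->
  \sum_l h l = h i + h j + \sum_(l | (l != i) && (l != j)) h l.
Proof.
move=> ij; rewrite (bigD1 i) //= (bigD1 j) /=; last by rewrite eq_sym.
by rewrite addnA.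
Qed.

Lemma sq_sum_eq k (i j : 'I_k) (h h' : 'I_k -> nat) :
  i != j -> (forall l, l != i -> l != j -> h' l = h l) ->
  \sum_l (h' l) ^ 2 + (h i ^ 2 + h j ^ 2) = \sum_l (h l) ^ 2 + (h' i ^ 2 + h' j ^ 2).
Proof.
move=> ij H.
rewrite (sum_split2 (fun l => h' l ^ 2) ij) (sum_split2 (fun l => h l ^ 2) ij).
rewrite (eq_bigr (fun l => h l ^ 2)); last by move=> l /andP[li lj]; rewrite H.
set S := \sum_(i0 < k | _) _.
lia.
Qed.

Section Flow.
Variables (U V : finType) (Bs : {set U}) (tl hd : U -> V).
Definition erel : rel V := fun u v => [exists B in Bs, (tl B == u) && (hd B == v)].

Lemma flow (p : seq V) : forall x, path erel x p -> uniq (x :: p) ->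
  exists P : {set U}, [/\ P \subset Bs, (forall B, B \in P -> tl B \in x :: p) &
    forall y, \sum_(B in P) (tl B == y) + (y == last x p) =
              \sum_(B in P) (hd B == y) + (y == x)].
Proof.
elim: p => [|z p IH] x /=.
  move=> _ _; exists set0; split; [exact: sub0set| by move=> B; rewrite inE|].
  by move=> y; rewrite !big_set0.
case/andP=> exz pz /andP[xn uz].
have [P [PB Ptl Pfl]] := IH z pz uz.
case/existsP: exz => B0 /andP[B0B /andP[/eqP tB0 /eqP hB0]].
have B0P : B0 \notin P.
  by apply/negP => /Ptl; rewrite tB0 (negbTE xn).
exists (B0 |: P); split.
- by rewrite subUset sub1set B0B PB.
- move=> B; rewrite in_setU1 => /orP[/eqP -> | /Ptl]; first by rewrite tB0 inE eqxx.
  by move=> H; rewrite inE H orbT.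
- move=> y; rewrite !big_setU1 //= tB0 hB0.
  have := Pfl y; rewrite (eq_sym x y) (eq_sym z y); lia.
Qed.
End Flow.

Definition sw k (i j l : 'I_k) : 'I_k := if l == i then j else if l == j then i else l.

Lemma swK k (i j l : 'I_k) : sw i j (sw i j l) = l.
Proof.
rewrite /sw; case: (l =P i) => [->|ni].
  case: (j =P i) => [->|nj] //; by rewrite eqxx.
case: (l =P j) => [->|nj]; first by rewrite eqxx.
by move/eqP/negbTE: ni => ->; move/eqP/negbTE: nj => ->.
Qed.

Definition swapt k (i j : 'I_k) (T : Type) (s : k.-tuple T) : k.-tuple T :=
  [tuple tnth s (sw i j l) | l < k].

Lemma tnth_swapt k (i j l : 'I_k) (T : Type) (s : k.-tuple T) :
  tnth (swapt i j s) l = tnth s (sw i j l).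
Proof. exact: tnth_mktuple. Qed.

Lemma mem_swapt k (i j : 'I_k) (T : eqType) (s : k.-tuple T) y :
  (y \in swapt i j s) = (y \in s).
Proof.
apply/tnthP/tnthP => [[l ->]|[l ->]]; first by exists (sw i j l); rewrite tnth_swapt.
by exists (sw i j l); rewrite tnth_swapt swK.
Qed.

Lemma uniq_swapt k (i j : 'I_k) (T : eqType) (s : k.-tuple T) :
  uniq s -> uniq (swapt i j s).
Proof.
move/tuple_uniqP => inj; apply/tuple_uniqP => a b; rewrite !tnth_swapt => /inj E.
by rewrite -(swK i j a) E swK.
Qed.

Definition cnt (T : finType) k (Bs : {set {set T}}) (f : {set T} -> k.-tuple T)
  (y : T) (l : 'I_k) : nat := \sum_(B in Bs) (tnth (f B) l == y).
Definition Phi (T : finType) k (Bs : {set {set T}}) (f : {set T} -> k.-tuple T) :=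
  \sum_(y : T) \sum_(l < k) (cnt Bs f y l) ^ 2.

Lemma improve (T : finType) k (Bs : {set {set T}}) (f : {set T} -> k.-tuple T) (x : T) (i j : 'I_k) :
  block_ordering Bs f -> cnt Bs f x j + 2 <= cnt Bs f x i ->
  exists f' : {set T} -> k.-tuple T, block_ordering Bs f' /\ Phi Bs f' < Phi Bs f.
Proof.
move=> bo Hx.
have ij : i != j by apply/eqP => E; rewrite E in Hx; lia.
pose tl := fun B => tnth (f B) i. pose hd := fun B => tnth (f B) j.
pose R := [set y | connect (erel Bs tl hd) x y].
have xR : x \in R by rewrite inE connect0.
have Rcl : forall B, B \in Bs -> tl B \in R -> hd B \in R.
  move=> B BB; rewrite !inE => c; apply: connect_trans c _; apply: connect1.
  by apply/existsP; exists B; rewrite BB !eqxx.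
have [w wR ltw] : exists2 w, w \in R & cnt Bs f w i < cnt Bs f w j.
  case: (boolP [exists w in R, cnt Bs f w i < cnt Bs f w j]).
    by case/exists_inP => w wR lt; exists w.
  move=> H; exfalso.
  have le : forall w, w \in R -> cnt Bs f w j <= cnt Bs f w i.
    move=> w wR; rewrite leqNgt; apply/negP => lt; move/negP: H; apply.
    by apply/exists_inP; exists w.
  have := ltn_sum_pt xR le ltac:(lia).
  have E : forall (g : {set T} -> T),
      \sum_(w in R) \sum_(B in Bs) (g B == w) = \sum_(B in Bs) (g B \in R).
    move=> g; rewrite exchange_big /=; apply: eq_bigr => B _; exact: sum_eq_in.
  rewrite /cnt !E ltnNge => /negP; apply; apply: leq_sum => B BB.
  by case tR: (tl B \in R) => //=; rewrite (Rcl B BB tR).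
have wx : w != x by apply/eqP => E; rewrite E in ltw; lia.
have [p [pth up lastp]] : exists p, [/\ path (erel Bs tl hd) x p, uniq (x :: p) & last x p = w].
  move: wR; rewrite inE => /connectP [p pth ->].
  case: (shortenP pth) => p' pth' up' _; by exists p'.
have [P [PB Ptl Pfl]] := flow pth up.
rewrite lastp in Pfl.
pose f' := fun B => if B \in P then swapt i j (f B) else f B.
have Esub : forall F : {set T} -> nat,
    \sum_(B in Bs | B \in P) F B = \sum_(B in P) F B.
  move=> F; apply: eq_bigl => B; apply/andP/idP => [[]//|BP]; split=> //.
  exact: (subsetP PB).
have cntl : forall y l, l != i -> l != j -> cnt Bs f' y l = cnt Bs f y l.
  move=> y l li lj; rewrite /cnt; apply: eq_bigr => B _; rewrite /f'.
  by case: (B \in P) => //; rewrite tnth_swapt /sw (negbTE li) (negbTE lj).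
have cnti : forall y, cnt Bs f' y i + (y == x) = cnt Bs f y i + (y == w).
  move=> y; rewrite /cnt (bigID (fun B => B \in P)) /=.
  rewrite [X in _ = X + _](bigID (fun B => B \in P)) /= !Esub.
  rewrite [X in X + _ + _ = _](eq_bigr (fun B => nat_of_bool (hd B == y))); last first.
    by move=> B BP; rewrite /f' BP tnth_swapt /sw eqxx.
  rewrite [X in _ + X + _ = _](eq_bigr (fun B => nat_of_bool (tl B == y))); last first.
    by move=> B /andP[_ /negbTE BP]; rewrite /f' BP.
  have := Pfl y; rewrite /tl /hd /=; lia.
have cntj : forall y, cnt Bs f' y j + (y == w) = cnt Bs f y j + (y == x).
  move=> y; rewrite /cnt (bigID (fun B => B \in P)) /=.
  rewrite [X in _ = X + _](bigID (fun B => B \in P)) /= !Esub.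
  rewrite [X in X + _ + _ = _](eq_bigr (fun B => nat_of_bool (tl B == y))); last first.
    by move=> B BP; rewrite /f' BP tnth_swapt /sw (eq_sym j i) (negbTE ij) eqxx.
  rewrite [X in _ + X + _ = _](eq_bigr (fun B => nat_of_bool (hd B == y))); last first.
    by move=> B /andP[_ /negbTE BP]; rewrite /f' BP.
  have := Pfl y; rewrite /tl /hd /=; lia.
exists f'; split.
  move=> B BB; rewrite /f'; case: (B \in P); last exact: bo.
  have [u m] := bo B BB; split; first exact: uniq_swapt.
  by move=> y; rewrite mem_swapt.
rewrite /Phi; apply: (@ltn_sum_pt _ xpredT _ _ x) => //.
  move=> y _.
  have := sq_sum_eq ij (cntl y).
  have := cnti y; have := cntj y.
  case: (y =P x) => [->|nx]; first by rewrite (eq_sym x w) (negbTE wx) /=; nia.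
  case: (y =P w) => [->|nw] /=; last lia.
  nia.
have := sq_sum_eq ij (cntl x).
have := cnti x; have := cntj x; rewrite eqxx (eq_sym x w) (negbTE wx) /=; nia.
Qed.

Lemma sum_cnt (T : finType) k (Bs : {set {set T}}) (f : {set T} -> k.-tuple T) x :
  block_ordering Bs f -> \sum_(l < k) cnt Bs f x l = #|[set B in Bs | x \in B]|.
Proof.
move=> bo; rewrite /cnt exchange_big card_sumb /=; apply: eq_bigr => B BB.
have [u m] := bo B BB; rewrite -m -(count_uniq_mem x u).
rewrite -sum1_count big_tuple [RHS]big_mkcond /=; apply: eq_bigr => l _.
by case: (tnth (f B) l == x).
Qed.

Lemma spread k m (g : 'I_k -> nat) : \sum_l g l = k * m ->
  forall l, g l != m -> exists i j, g j + 2 <= g i.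
Proof.
move=> S l gl.
case: (ltngtP (g l) m) => [lt|gt|eq]; last by rewrite eq eqxx in gl.
- case: (boolP [exists j, m < g j]) => [/existsP [j gj]|H].
    by exists j, l; lia.
  have le : forall j, g j <= m by move=> j; rewrite leqNgt; apply/negP => gj;
    move/negP: H; apply; apply/existsP; exists j.
  have := @ltn_sum_pt _ xpredT g (fun _ => m) l isT (fun j _ => le j) lt.
  by rewrite S sum_nat_const card_ord ltnn.
- case: (boolP [exists j, g j < m]) => [/existsP [j gj]|H].
    by exists l, j; lia.
  have le : forall j, m <= g j by move=> j; rewrite leqNgt; apply/negP => gj;
    move/negP: H; apply; apply/existsP; exists j.
  have := @ltn_sum_pt _ xpredT (fun _ => m) g l isT (fun j _ => le j) gt.
  by rewrite S sum_nat_const card_ord ltnn.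
Qed.

Lemma exist_bal (T : finType) k (Bs : {set {set T}}) m :
  (forall x, #|[set B in Bs | x \in B]| = k * m) ->
  forall n (f : {set T} -> k.-tuple T), block_ordering Bs f -> Phi Bs f <= n ->
  exists f' : {set T} -> k.-tuple T, block_ordering Bs f' /\ forall y l, cnt Bs f' y l = m.
Proof.
move=> Hr; elim=> [|n IH] f bo Hn;
  (case: (boolP [forall y, forall l, cnt Bs f y l == m]) => H;
    [exists f; split=> // y l; exact/eqP/(forallP (forallP H y))|]);
  (have [y Hy] : exists y, ~~ [forall l, cnt Bs f y l == m]
     by apply/existsP; rewrite -negb_forall);
  (case/forallPn: Hy => l Hl);
  (have [i [j Hij]] := spread (etrans (sum_cnt y bo) (Hr y)) Hl);
  have [f' [bo' lt]] := improve bo Hij.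
  by move: lt Hn; lia.
by apply: (IH f' bo'); lia.
Qed.

Theorem mainTheorem4 (T : finType) (t k lam : nat) (Bs : {set {set T}}) :
  is_design t k lam Bs ->
  ((exists f : {set T} -> k.-tuple T,
      block_ordering Bs f /\ balanced_ordering Bs f)
   <-> #|T| %| #|Bs|)
  /\ (forall x : T, (#|T| %| #|Bs|) = (k %| #|[set B in Bs | x \in B]|)).
Proof.
move=> D; have D' := D; case: D' => t1 tk kv Bk Hl.
have k0 : 0 < k by lia.
have v0 : 0 < #|T| by lia.
have [x0 _] : exists x0 : T, x0 \in T by apply/card_gt0P.
have VR := fun x => design_vr x D.
split; last first.
  move=> x; have E := VR x.
  apply/idP/idP => /dvdnP [m Hm].
    apply/dvdnP; exists m; apply/eqP; rewrite -(eqn_pmul2l v0) E Hm; apply/eqP; lia.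
  apply/dvdnP; exists m; apply/eqP; rewrite -(eqn_pmul2r k0) -E Hm; apply/eqP; lia.
split.
  case=> f [bo bal]; apply/dvdnP; exists #|[set B in Bs | tnth (f B) (Ordinal k0) == x0]|.
  by rewrite bal.
case/dvdnP => m Hm.
have Hr : forall x, #|[set B in Bs | x \in B]| = k * m.
  move=> x; apply/eqP; rewrite -(eqn_pmul2l v0) VR Hm; apply/eqP; lia.
pose f0 := fun B : {set T} => insubd (nseq_tuple k x0) (enum B).
have bo0 : block_ordering Bs f0.
  move=> B BB.
  have E : val (f0 B) = enum B by rewrite /f0 val_insubd -cardE Bk // eqxx.
  split; first by rewrite E enum_uniq.
  by move=> y; rewrite -[LHS]/(y \in val (f0 B)) E mem_enum.
have [f [bo bal]] := exist_bal Hr bo0 (leqnn _).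
exists f; split=> // x i.
by rewrite card_sumb -/(cnt Bs f x i) bal Hm.
Qed.
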